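(* Let $x_0\in\mathbb{R}$ be a constant leader state and consider scalar followers updated synchronously for $t\in\mathbb{Z}_{\ge0}$ by $$x_i(t+1)=\frac{1}{1+n_i+\gamma_i}\Big(x_i(t)+\sum_{j\in\mathcal{N}_i}x_j(t-T_{ji})+\gamma_i x_0\Big),\qquad i=1,\dots,n,$$ where the neighbor sets $\mathcal{N}_i$ among followers are fixed and symmetric, $n_i=|\mathcal{N}_i|$, $\gamma_i\in\{0,1\}$, the delays $T_{ji}\in\mathbb{Z}_{\ge0}$ are constant, and the whole network including the leader (edges from the leader to each $i$ with $\gamma_i=1$) is connected. Then, regardless of the delays and initial values, $x_i(t)\to x_0$ as $t\to\infty$ for all $i$. *)

(* Defs.v *)
From HB Require Import structures.
From mathcomp Require Import all_boot all_order all_algebra.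
From mathcomp Require Import all_classical all_reals topology normedtype sequences.
Set Implicit Arguments. Unset Strict Implicit. Unset Printing Implicit Defensive.
Import Order.TTheory GRing.Theory Num.Theory.

(* Follower nodes are 'I_n; the leader is the extra node None of option 'I_n.
   [adj] is the (undirected) follower neighbor relation, [gamma i] says whether
   follower i receives the leader's state. *)
Definition leader_net (n : nat) (adj : rel 'I_n) (gamma : 'I_n -> bool)
  : rel (option 'I_n) :=
  fun u v => match u, v with
  | Some i, Some j => adj i j
  | None, Some j => gamma j
  | Some i, None => gamma i
  | None, None => false
  end.

Definition net_connected (n : nat) (adj : rel 'I_n) (gamma : 'I_n -> bool) : Prop :=
  forall u v : option 'I_n, connect (leader_net adj gamma) u v.

Definition deg (n : nat) (adj : rel 'I_n) (i : 'I_n) : nat := #|[pred j | adj i j]|.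

(* Main.v *)
Require Import Defs.
From HB Require Import structures.
From mathcomp Require Import all_boot all_order all_algebra.
From mathcomp Require Import all_classical all_reals topology normedtype sequences.
From mathcomp Require Import ring lra zify.
Import Order.TTheory GRing.Theory Num.Theory numFieldNormedType.Exports.
Local Open Scope classical_set_scope.
Local Open Scope ring_scope.

Section S.
Variables (R : realType) (n : nat) (adj : rel 'I_n)
  (gamma : 'I_n -> bool) (T : 'I_n -> 'I_n -> nat) (x0 : R)
  (x : 'I_n -> int -> R).
Hypothesis hrec : forall (i : 'I_n) (t : nat),
      x i (t.+1)%:Z =
        (1 + (deg adj i)%:R + (gamma i)%:R)^-1 *
        (x i t%:Z + \sum_(j : 'I_n | adj i j) x j (t%:Z - (T j i)%:Z)
         + (gamma i)%:R * x0).

Let y i s := x i s - x0.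
Let c i : R := (1 + (deg adj i)%:R + (gamma i)%:R)^-1.

Lemma dpos i : 0 < 1 + (deg adj i)%:R + (gamma i)%:R :> R.
Proof. have := ler0n R (deg adj i); have := ler0n R (gamma i); lra. Qed.

Lemma yrec i (u : nat) : y i u.+1 = c i * (y i u + \sum_(l | adj i l) y l (u%:Z - (T l i)%:Z)).
Proof.
rewrite /y /c hrec sumrB.
have -> : \sum_(l | adj i l) x0 = (deg adj i)%:R * x0.
  by rewrite sumr_const /deg mulr_natl.
have := dpos i; set d := (1 + _ + _) => hd.
have hd0 : d != 0 by rewrite gt_eqF.
rewrite /d in hd0 *. field.
exact: hd0.
Qed.

Let D : nat := (\max_(j : 'I_n) \max_(i : 'I_n) T j i)%N.
Lemma TleD j i : (T j i <= D)%N.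
Proof. rewrite /D. have h1 := leq_bigmax (F := T j) i. have h2 := leq_bigmax (F := fun j => (\max_i T j i)%N) j. exact: leq_trans h1 h2. Qed.

Let al : R := (n%:R + 2)^-1.
Lemma al_gt0 : 0 < al.
Proof. by rewrite invr_gt0; have := ler0n R n; lra. Qed.
Lemma al_le1 : al <= 1.
Proof. have := ler0n R n => h; rewrite /al invf_le1; lra. Qed.
Lemma c_ge i : al <= c i.
Proof.
rewrite /al /c lef_pV2 ?posrE ?dpos //; last by have := ler0n R n; lra.
have : (deg adj i <= n)%N by rewrite /deg (leq_trans (max_card _)) // card_ord.
rewrite -(ler_nat R) => h. have : (gamma i)%:R <= 1 :> R by case: (gamma i).
lra.
Qed.
Lemma cK i : c i * (1 + (deg adj i)%:R + (gamma i)%:R) = 1.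
Proof. by rewrite /c mulVf // gt_eqF // dpos. Qed.
Lemma c_ge0 i : 0 <= c i.
Proof. by rewrite /c invr_ge0 ltW // dpos. Qed.

Lemma ybound i (u : nat) A B : `|y i u| <= A ->
  \sum_(l | adj i l) `|y l (u%:Z - (T l i)%:Z)| <= B ->
  `|y i u.+1| <= c i * (A + B).
Proof.
move=> hA hB; rewrite yrec normrM ger0_norm ?c_ge0 // ler_wpM2l ?c_ge0 //.
apply: (le_trans (ler_normD _ _)); apply: lerD => //.
exact: le_trans (ler_norm_sum _ _ _) hB.
Qed.

Lemma sumV i (V : R) : \sum_(l | adj i l) V = (deg adj i)%:R * V.
Proof. by rewrite sumr_const /deg mulr_natl. Qed.

Definition H (t0 : nat) V := forall i (s : int), t0%:Z - D%:Z <= s -> `|y i s| <= V.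

Lemma prop0 V : 0 <= V -> (forall i (s : int), - D%:Z <= s <= 0 -> `|y i s| <= V) -> H 0 V.
Proof.
move=> V0 hw.
suff: forall t : nat, forall i s, - D%:Z <= s <= t%:Z -> `|y i s| <= V.
  move=> h i s hs.
  have hs' : - D%:Z <= s by rewrite sub0r in hs.
  case: s hs hs' => [m|m] hs hs'; first by apply: (h m); rewrite hs' lexx.
  by apply: (h 0%N); rewrite hs'.
elim=> [|t IH] i s; first exact: hw.
case/andP=> h1 h2.
have [hst|hst] := leP s t%:Z; first by apply: IH; rewrite h1.
have -> : s = t.+1 by lia.
apply: (le_trans (@ybound _ _ V ((deg adj i)%:R * V) _ _)).
- apply: IH; rewrite lexx andbT; lia.
- rewrite -sumV; apply: ler_sum => l _; apply: IH.
  have := TleD l i; lia.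
- have hc := cK i.
  have hp : 0 <= c i * (gamma i)%:R * V by rewrite !mulr_ge0 // c_ge0.
  have -> : c i * (V + (deg adj i)%:R * V) =
     c i * (1 + (deg adj i)%:R + (gamma i)%:R) * V - c i * (gamma i)%:R * V by ring.
  rewrite hc; lra.
Qed.

Definition good t0 V k i := forall s : nat, (t0 + k * D.+1 <= s)%N ->
  `|y i s| <= (1 - al ^+ k) * V.

Lemma good_gamma t0 V i k : H t0 V -> 0 <= V -> gamma i -> good t0 V k.+1 i.
Proof.
move=> hH V0 gi s hs.
case: s hs => [|u] hs; first by rewrite mulSn in hs; lia.
apply: (le_trans (@ybound _ _ V ((deg adj i)%:R * V) _ _)).
- apply: hH; lia.
- rewrite -sumV; apply: ler_sum => l _; apply: hH.
  have := TleD l i; lia.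
- have := cK i; rewrite gi /= => hc.
  have ha : al ^+ k.+1 <= c i.
    apply: le_trans (c_ge i); rewrite exprS.
    have := exprn_ile1 k (ltW al_gt0) al_le1; have := al_gt0;  nra.
  have -> : c i * (V + (deg adj i)%:R * V) =
     c i * (1 + (deg adj i)%:R + 1) * V - c i * V by ring.
  rewrite hc; nra.
Qed.

Lemma good_adj t0 V i j k : H t0 V -> 0 <= V -> adj i j -> good t0 V k j ->
  good t0 V k.+1 i.
Proof.
move=> hH V0 aij hj s hs.
case: s hs => [|u] hs; first by rewrite mulSn in hs; lia.
have ak0 : 0 <= al ^+ k by rewrite exprn_ge0 // ltW // al_gt0.
apply: (le_trans (@ybound _ _ V ((deg adj i)%:R * V - al ^+ k * V) _ _)).
- apply: hH; lia.
- rewrite -sumV (bigD1 j) //= [X in _ <= X - _](bigD1 j) //=.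
  have -> : V + \sum_(l | adj i l && (l != j)) V - al ^+ k * V =
      (1 - al ^+ k) * V + \sum_(l | adj i l && (l != j)) V by ring.
  apply: lerD.
  + have hT := TleD j i.
    have -> : u%:Z - (T j i)%:Z = (u - T j i)%N by rewrite subzn //; lia.
    apply: hj; rewrite mulSn in hs; lia.
  + apply: ler_sum => l /andP[ail _]; apply: hH; have := TleD l i; lia.
- have hc := cK i; have hca := c_ge i; have hc0 := c_ge0 i.
  have hp : 0 <= c i * (gamma i)%:R * V by rewrite !mulr_ge0.
  have h2 : al * al ^+ k * V <= c i * al ^+ k * V.
    by rewrite ler_wpM2r // ler_wpM2r.
  have -> : c i * (V + ((deg adj i)%:R * V - al ^+ k * V)) =
     c i * (1 + (deg adj i)%:R + (gamma i)%:R) * V - c i * (gamma i)%:R * V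
     - c i * al ^+ k * V by ring.
  rewrite hc exprS; lra.
Qed.

Lemma good_mono t0 V k k' i : good t0 V k i -> (k <= k')%N -> 0 <= V -> good t0 V k' i.
Proof.
move=> h kk V0 s hs; apply: le_trans (h s _) _.
  by have := leq_mul kk (leqnn D.+1); lia.
rewrite ler_wpM2r // lerD2l lerN2 ler_wiXn2l // ?al_le1 // ltW // al_gt0 //.
Qed.

Lemma good_path t0 V (hH : H t0 V) (V0 : 0 <= V) p : forall i,
  path (leader_net adj gamma) (Some i) p -> last (Some i) p = None ->
  good t0 V (size p) i.
Proof.
elim: p => [|v p IH] i //=.
case/andP=> e hp hl; case: v e hp hl => [j|] e hp hl.
- exact: good_adj hH V0 e (IH j hp hl).
- exact: good_gamma.
Qed.

Hypothesis hconn : net_connected adj gamma.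

Lemma existsK : exists K, forall t0 V, H t0 V -> 0 <= V -> forall i, good t0 V K i.
Proof.
have hk : forall i, exists k, forall t0 V, H t0 V -> 0 <= V -> good t0 V k i.
  move=> i; case/connectP: (hconn (Some i) None) => p hp hl.
  by exists (size p) => t0 V hH V0; apply: good_path => //; rewrite -hl.
have [kf hkf] := choice hk.
exists (\max_i kf i)%N => t0 V hH V0 i.
apply: good_mono (hkf i t0 V hH V0) _ V0.
exact: (leq_bigmax (F := kf) i).
Qed.

Lemma le_sum_term (I : finType) (F : I -> R) j : (forall i, 0 <= F i) -> F j <= \sum_i F i.
Proof. by move=> h; rewrite (bigD1 j) //= lerDl sumr_ge0. Qed.

Lemma main_sec i : (fun t : nat => x i t%:Z) @ \oo --> x0.
Proof.
have [K hK] := existsK.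
set rho := 1 - al ^+ K.
have rho0 : 0 <= rho by rewrite /rho subr_ge0 exprn_ile1 // ?al_le1 // ltW // al_gt0.
have rho1 : rho < 1.
  rewrite /rho; have : 0 < al ^+ K by rewrite exprn_gt0 // al_gt0.
  lra.
set P := (K * D.+1 + D)%N.
have contr : forall t0 V, H t0 V -> 0 <= V -> H (t0 + P) (rho * V).
  move=> t0 V hH V0 l s hs.
  have hg := hK t0 V hH V0 l.
  rewrite /P in hs; move: hs hg; rewrite /good; move: (K * D.+1)%N => L.
  case: s => [m|m] hs hg; last by lia.
  apply: hg; lia.
set V0 := \sum_(l : 'I_n) \sum_(k < D.+1) `|y l (- (k : nat)%:Z)|.
have V00 : 0 <= V0 by rewrite sumr_ge0 // => l _; rewrite sumr_ge0.
have H0 : H 0 V0.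
  apply: prop0 => // l s /andP[h1 h2].
  have hs : s = - (`|s|%N)%:Z by lia.
  have hk : (`|s|%N < D.+1)%N by lia.
  have g1 := @le_sum_term _ (fun l => \sum_(k < D.+1) `|y l (- (k : nat)%:Z)|) (l)
    (fun l => sumr_ge0 _ (fun k _ => normr_ge0 _)).
  have g2 := @le_sum_term _ (fun k : 'I_D.+1 => `|y l (- (k : nat)%:Z)|) (Ordinal hk)
    (fun _ => normr_ge0 _).
  rewrite hs; exact: le_trans g2 g1.
have Hm : forall m, H (m * P) (rho ^+ m * V0).
  elim=> [|m IH]; first by rewrite mul0n expr0 mul1r.
  rewrite mulSnr exprS -mulrA; apply: contr => //.
  by rewrite mulr_ge0 // exprn_ge0.
apply/cvgrPdist_le => e e0.
have : `|rho| < 1 by rewrite ger0_norm.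
move/cvg_expr/cvgrPdist_le => /(_ (e / (V0 + 1))).
have ep : 0 < e / (V0 + 1) by rewrite divr_gt0 //; lra.
case/(_ ep) => N _ hN.
exists (N * P)%N => // t /= ht.
rewrite distrC.
have -> : x i t - x0 = y i t by [].
apply: (le_trans (Hm N i t _)); first by lia.
have := hN N (leqnn N); rewrite sub0r normrN ger0_norm ?exprn_ge0 // => hr.
apply: (le_trans (ler_wpM2r V00 hr)).
have q : e / (V0 + 1) * V0 = e - e / (V0 + 1).
  by field; rewrite gt_eqF //; lra.
rewrite q; lra.
Qed.
End S.

Theorem mainTheorem7 (R : realType) (n : nat) (adj : rel 'I_n)
  (gamma : 'I_n -> bool) (T : 'I_n -> 'I_n -> nat) (x0 : R)
  (x : 'I_n -> int -> R) :
  symmetric adj -> irreflexive adj ->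
  net_connected adj gamma ->
  (forall (i : 'I_n) (t : nat),
      x i (t.+1)%:Z =
        (1 + (deg adj i)%:R + (gamma i)%:R)^-1 *
        (x i t%:Z + \sum_(j : 'I_n | adj i j) x j (t%:Z - (T j i)%:Z)
         + (gamma i)%:R * x0)) ->
  forall i : 'I_n, (fun t : nat => x i t%:Z) @ \oo --> x0.
Proof.
move=> _ _ hc hr i; exact: (@main_sec R n adj gamma T x0 x hr hc i).
Qed.
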